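(* Assume $k_{+\infty}=k_{-\infty}=:k_\infty$. For every twice continuously differentiable $J:\mathbb{R}\to(0,\infty)$ with $J(x)\to1$ as $x\to\pm\infty$, $$T\ \ge\ \mathrm{sech}^2\left\{\frac12\int_{-\infty}^{\infty}\left|\frac{J^2}{k_\infty}\left\{k^2+\frac{J''}{J}\right\}-\frac{k_\infty}{J^2}\right|\mathrm{d}x\right\}.$$
   Context: Standing setup: $k^2:\mathbb{R}\to\mathbb{R}$ is a piecewise continuous function (it may be negative somewhere) with $k^2(x)\to k_{\pm\infty}^2$ as $x\to\pm\infty$, where $k_{\pm\infty}>0$ and $k^2-k_{\pm\infty}^2$ is integrable near $\pm\infty$. For the equation $u''+k^2(x)u=0$ there is a solution with $u(x)=e^{ik_{-\infty}x}+r\,e^{-ik_{-\infty}x}+o(1)$ as $x\to-\infty$ and $u(x)=\tau\,e^{ik_{+\infty}x}+o(1)$ as $x\to+\infty$; the transmission probability is $T=(k_{+\infty}/k_{-\infty})|\tau|^2$. Here $\mathrm{sech}=1/\cosh$, and if the integral equals $+\infty$ the bound is read as the trivial statement $T\ge 0$. *)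

(* Defs.v *)
From Stdlib Require Import Reals Lra.
Open Scope R_scope.

Definition lim_pinf (f : R -> R) (l : R) : Prop :=
  forall eps, eps > 0 -> exists M, forall x, x >= M -> Rabs (f x - l) < eps.

Definition lim_minf (f : R -> R) (l : R) : Prop :=
  forall eps, eps > 0 -> exists M, forall x, x <= M -> Rabs (f x - l) < eps.

(* Piecewise continuity: on every bounded interval [a,b] there is a finite
   subdivision a = x_0 < ... < x_n = b such that on each open piece
   (x_i, x_{i+1}) f agrees with a function continuous on [x_i, x_{i+1}]
   (i.e. f is continuous there with finite one-sided limits at the ends). *)
Definition piecewise_continuous (f : R -> R) : Prop :=
  forall a b, a < b ->
    exists (n : nat) (x : nat -> R),
      x 0%nat = a /\ x n = b /\
      (forall i, (i < n)%nat -> x i < x (S i)) /\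
      (forall i, (i < n)%nat ->
         exists g : R -> R,
           (forall t, x i <= t <= x (S i) -> continuity_pt g t) /\
           (forall t, x i < t < x (S i) -> f t = g t)).

Definition integrable_near_pinf (f : R -> R) : Prop :=
  exists M B, forall b, M <= b ->
    exists pr : Riemann_integrable (fun t => Rabs (f t)) M b, RiemannInt pr <= B.

Definition integrable_near_minf (f : R -> R) : Prop :=
  exists M B, forall a, a <= M ->
    exists pr : Riemann_integrable (fun t => Rabs (f t)) a M, RiemannInt pr <= B.

Definition improper_integral_R (f : R -> R) (I : R) : Prop :=
  (forall a b, a <= b -> inhabited (Riemann_integrable f a b)) /\
  forall eps, eps > 0 -> exists M, forall a b, a <= - M -> M <= b ->
    forall pr : Riemann_integrable f a b, Rabs (RiemannInt pr - I) < eps.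

(* u : R -> R (a real or imaginary part) solves u'' + k2 u = 0 in the
   standard (Caratheodory) sense for piecewise continuous k2:
   u is differentiable with derivative du, and
   du(b) - du(a) = - int_a^b k2 u. *)
Definition solves_ode (k2 u du : R -> R) : Prop :=
  (forall x, derivable_pt_lim u x (du x)) /\
  (forall a b, a <= b ->
     exists pr : Riemann_integrable (fun t => k2 t * u t) a b,
       du b - du a = - RiemannInt pr).

(* Main.v *)
Require Import Defs.
From Stdlib Require Import Reals.
From Stdlib Require Import Lra Lia Psatz ClassicalEpsilon FunctionalExtensionality Classical.
Open Scope R_scope.

Lemma Dval f x l l' : derivable_pt_lim f x l -> l = l' -> derivable_pt_lim f x l'.
Proof. intros H ->; exact H. Qed.

Lemma Dext f g x l : (forall y, f y = g y) -> derivable_pt_lim f x l -> derivable_pt_lim g x l.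
Proof.
  intros E H eps He. destruct (H eps He) as [d Hd]. exists d. intros h h0 hl.
  rewrite <- !E. apply Hd; auto.
Qed.

Lemma Dplus f g x a b : derivable_pt_lim f x a -> derivable_pt_lim g x b ->
  derivable_pt_lim (fun y => f y + g y) x (a + b).
Proof. intros; apply (derivable_pt_lim_plus f g); auto. Qed.

Lemma Dsub f g x a b : derivable_pt_lim f x a -> derivable_pt_lim g x b ->
  derivable_pt_lim (fun y => f y - g y) x (a - b).
Proof. intros; apply (derivable_pt_lim_minus f g); auto. Qed.

Lemma Dmult f g x a b : derivable_pt_lim f x a -> derivable_pt_lim g x b ->
  derivable_pt_lim (fun y => f y * g y) x (a * g x + f x * b).
Proof. intros; apply (derivable_pt_lim_mult f g); auto. Qed.

Lemma Dconst c x : derivable_pt_lim (fun _ => c) x 0.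
Proof. apply derivable_pt_lim_const. Qed.

Lemma Did x : derivable_pt_lim (fun y => y) x 1.
Proof. apply derivable_pt_lim_id. Qed.

Lemma Dscal c f x a : derivable_pt_lim f x a -> derivable_pt_lim (fun y => c * f y) x (c * a).
Proof. intros H. eapply Dval. apply (Dmult (fun _ => c) f); [apply Dconst|exact H]. ring. Qed.

Lemma Dcomp f g x a b : derivable_pt_lim f x a -> derivable_pt_lim g (f x) b ->
  derivable_pt_lim (fun y => g (f y)) x (b * a).
Proof. intros; apply (derivable_pt_lim_comp f g); auto. Qed.

Lemma Dinv f x a : derivable_pt_lim f x a -> f x <> 0 ->
  derivable_pt_lim (fun y => / f y) x (- a / (f x)^2).
Proof.
  intros H Hn. eapply Dval.
  - apply (Dext ((fun _ => 1) / f)%F). { intros; unfold div_fct, Rdiv; ring. }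
    apply (derivable_pt_lim_div (fun _ => 1) f); [apply Dconst|exact H|exact Hn].
  - unfold Rsqr; field; auto.
Qed.

Lemma Ddiv f g x a b : derivable_pt_lim f x a -> derivable_pt_lim g x b -> g x <> 0 ->
  derivable_pt_lim (fun y => f y / g y) x ((a * g x - b * f x) / (g x)^2).
Proof.
  intros H1 H2 Hn. eapply Dval.
  - apply (Dext (f / g)%F). { intros; reflexivity. }
    apply (derivable_pt_lim_div f g); [exact H1|exact H2|exact Hn].
  - unfold Rsqr; field; auto.
Qed.

Lemma Dsqrt f x a : derivable_pt_lim f x a -> 0 < f x ->
  derivable_pt_lim (fun y => sqrt (f y)) x (a / (2 * sqrt (f x))).
Proof.
  intros H Hp. eapply Dval. apply (Dcomp f sqrt); [exact H|apply derivable_pt_lim_sqrt; auto].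
  field. apply Rgt_not_eq, sqrt_lt_R0; auto.
Qed.

Lemma Dln f x a : derivable_pt_lim f x a -> 0 < f x ->
  derivable_pt_lim (fun y => ln (f y)) x (a / f x).
Proof.
  intros H Hp. eapply Dval. apply (Dcomp f ln); [exact H|apply derivable_pt_lim_ln; auto].
  field. lra.
Qed.

Lemma Dpow2 f x a : derivable_pt_lim f x a -> derivable_pt_lim (fun y => f y ^ 2) x (2 * f x * a).
Proof. intros H. eapply Dval. - apply (Dext (fun y => f y * f y)). { intros; ring. } apply (Dmult f f); eauto. - ring. Qed.

Lemma mono_deriv F F' a b : a < b ->
  (forall s, a <= s <= b -> derivable_pt_lim F s (F' s)) ->
  (forall s, a < s < b -> 0 <= F' s) -> F a <= F b.
Proof.
  intros hab HD Hpos.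
  assert (pr1 : forall c, a < c < b -> derivable_pt F c).
  { intros c Hc. exists (F' c). apply HD; lra. }
  assert (pr2 : forall c, a < c < b -> derivable_pt id c).
  { intros c Hc. exists 1. apply derivable_pt_lim_id. }
  destruct (MVT F id a b pr1 pr2 hab) as [c [P HP]].
  - intros c Hc. apply derivable_continuous_pt. exists (F' c). apply HD; auto.
  - intros c Hc. apply derivable_continuous_pt. exists 1. apply derivable_pt_lim_id.
  - rewrite (derive_pt_eq_0 F c (F' c) (pr1 c P)) in HP by (apply HD; lra).
    rewrite (derive_pt_eq_0 id c 1 (pr2 c P)) in HP by apply derivable_pt_lim_id.
    unfold id in HP. specialize (Hpos c P). nra.
Qed.

Lemma const_deriv F a b : a <= b ->
  (forall s, a <= s <= b -> derivable_pt_lim F s 0) -> F a = F b.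
Proof.
  intros hab HD. destruct (Req_dec a b) as [->|hne]; [reflexivity|].
  apply Rle_antisym.
  - apply (mono_deriv F (fun _ => 0)); auto; [lra|intros; lra].
  - assert (- F a <= - F b -> F b <= F a) by lra. apply H.
    apply (mono_deriv (fun y => - F y) (fun _ => 0)); [lra| |intros; lra].
    intros s Hs. eapply Dval. apply derivable_pt_lim_opp. apply HD; auto. ring.
Qed.

Lemma FTC F phi a b : a <= b ->
  (forall s, a <= s <= b -> derivable_pt_lim F s (phi s)) ->
  (forall s, a <= s <= b -> continuity_pt phi s) ->
  forall pr : Riemann_integrable phi a b, RiemannInt pr = F b - F a.
Proof.
  intros hab HD HC pr.
  set (P := primitive hab (FTC_P1 hab HC)).
  rewrite (RiemannInt_P20 hab (FTC_P1 hab HC) pr). fold P.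
  assert (E : (fun y => F y - P y) a = (fun y => F y - P y) b).
  { apply (const_deriv (fun y => F y - P y)); auto. intros s Hs. eapply Dval. apply Dsub. apply HD; auto.
    apply (RiemannInt_P28 (f:=phi) (a:=a) (b:=b) (x:=s) hab HC Hs). ring. }
  simpl in E. lra.
Qed.

Lemma Dcos f x a : derivable_pt_lim f x a -> derivable_pt_lim (fun y => cos (f y)) x (- sin (f x) * a).
Proof. intros H. apply (Dcomp f cos); auto. apply derivable_pt_lim_cos. Qed.
Lemma Dsin f x a : derivable_pt_lim f x a -> derivable_pt_lim (fun y => sin (f y)) x (cos (f x) * a).
Proof. intros H. apply (Dcomp f sin); auto. apply derivable_pt_lim_sin. Qed.

Ltac Dtac :=
  lazymatch goal with
  | |- derivable_pt_lim (fun _ => ?c) _ _ => apply Dconst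
  | |- derivable_pt_lim (fun y => @?f y + @?g y) _ _ => eapply (Dplus f g); [Dtac|Dtac]
  | |- derivable_pt_lim (fun y => @?f y - @?g y) _ _ => eapply (Dsub f g); [Dtac|Dtac]
  | |- derivable_pt_lim (fun y => @?f y / @?g y) _ _ => eapply (Ddiv f g); [Dtac|Dtac|]
  | |- derivable_pt_lim (fun y => @?f y * @?g y) _ _ => eapply (Dmult f g); [Dtac|Dtac]
  | |- derivable_pt_lim (fun y => @?f y ^ 2) _ _ => eapply (Dpow2 f); Dtac
  | |- derivable_pt_lim (fun y => sqrt (@?f y)) _ _ => eapply (Dsqrt f); [Dtac|]
  | |- derivable_pt_lim (fun y => ln (@?f y)) _ _ => eapply (Dln f); [Dtac|]
  | |- derivable_pt_lim (fun y => / @?f y) _ _ => eapply (Dinv f); [Dtac|]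
  | |- derivable_pt_lim (fun y => cos (@?f y)) _ _ => eapply (Dcos f); Dtac
  | |- derivable_pt_lim (fun y => sin (@?f y)) _ _ => eapply (Dsin f); Dtac
  | |- derivable_pt_lim (fun y => y) _ _ => apply Did
  | _ => idtac
  end.

Lemma Cplus f g x : continuity_pt f x -> continuity_pt g x -> continuity_pt (fun y => f y + g y) x.
Proof. intros; exact (continuity_pt_plus f g x H H0). Qed.
Lemma Cminus f g x : continuity_pt f x -> continuity_pt g x -> continuity_pt (fun y => f y - g y) x.
Proof. intros; exact (continuity_pt_minus f g x H H0). Qed.
Lemma Cmult f g x : continuity_pt f x -> continuity_pt g x -> continuity_pt (fun y => f y * g y) x.
Proof. intros; exact (continuity_pt_mult f g x H H0). Qed.
Lemma Cdiv f g x : continuity_pt f x -> continuity_pt g x -> g x <> 0 -> continuity_pt (fun y => f y / g y) x.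
Proof. intros; exact (continuity_pt_div f g x H H0 H1). Qed.
Lemma Cconst c x : continuity_pt (fun _ => c) x.
Proof. apply continuity_pt_const. intros a b; reflexivity. Qed.
Lemma Cpow2 f x : continuity_pt f x -> continuity_pt (fun y => f y ^ 2) x.
Proof. intros. assert (E: (fun y => f y ^ 2) = (fun y => f y * f y)).
  { apply functional_extensionality. intros; ring. }
  rewrite E. apply Cmult; auto. Qed.
Lemma Cabs f x : continuity_pt f x -> continuity_pt (fun y => Rabs (f y)) x.
Proof. intros. exact (continuity_pt_comp f Rabs x H (Rcontinuity_abs (f x))). Qed.

Lemma Csqrt f x : continuity_pt f x -> 0 <= f x -> continuity_pt (fun y => sqrt (f y)) x.
Proof. intros H h. exact (continuity_pt_comp f sqrt x H (continuity_pt_sqrt _ h)). Qed.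
Lemma Cid x : continuity_pt (fun y => y) x.
Proof. apply derivable_continuous_pt. exists 1. apply derivable_pt_lim_id. Qed.

Ltac Ctac :=
  lazymatch goal with
  | |- continuity_pt (fun _ => ?c) _ => apply Cconst
  | |- continuity_pt (fun y => @?f y + @?g y) _ => apply (Cplus f g); [Ctac|Ctac]
  | |- continuity_pt (fun y => @?f y - @?g y) _ => apply (Cminus f g); [Ctac|Ctac]
  | |- continuity_pt (fun y => @?f y / @?g y) _ => apply (Cdiv f g); [Ctac|Ctac|]
  | |- continuity_pt (fun y => @?f y * @?g y) _ => apply (Cmult f g); [Ctac|Ctac]
  | |- continuity_pt (fun y => @?f y ^ 2) _ => apply (Cpow2 f); Ctac
  | |- continuity_pt (fun y => Rabs (@?f y)) _ => apply (Cabs f); Ctac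
  | |- continuity_pt (fun y => sqrt (@?f y)) _ => apply (Csqrt f); [Ctac|]
  | |- continuity_pt (fun y => y) _ => apply Cid
  | _ => idtac
  end.

Lemma alg_SW a1 a2 b1 b2 :
  ((a1^2+a2^2+b1^2+b2^2)/2)^2 - (a1*b2 - a2*b1)^2 >= (a1*b1 + a2*b2)^2.
Proof.
  assert (E: ((a1^2+a2^2+b1^2+b2^2)/2)^2 - (a1*b2 - a2*b1)^2 - (a1*b1 + a2*b2)^2
    = ((a1^2+a2^2-b1^2-b2^2)/2)^2) by field.
  assert (0 <= ((a1^2+a2^2-b1^2-b2^2)/2)^2) by (apply pow2_ge_0). lra.
Qed.

Lemma key_ineq S W m q eps : eps > 0 -> 0 <= S -> S^2 - W^2 >= m^2 ->
  0 <= (- q * m) * (1 + S / sqrt (S^2 - W^2 + eps)) / (S + sqrt (S^2 - W^2 + eps)) + Rabs q.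
Proof.
  intros he hS hm.
  set (r := sqrt (S^2 - W^2 + eps)).
  assert (hr : 0 < r) by (unfold r; apply sqrt_lt_R0; nra).
  assert (hr2 : r * r = S^2 - W^2 + eps) by (unfold r; apply sqrt_sqrt; nra).
  assert (hmr : Rabs m <= r).
  { assert (hm2 : m^2 <= r^2) by nra.
    destruct (Rle_dec (Rabs m) r) as [h|h]; auto.
    assert (r < Rabs m) by lra.
    assert (r^2 < (Rabs m)^2) by nra.
    assert (Rabs m ^2 = m^2) by (rewrite <- !Rsqr_pow2; symmetry; apply Rsqr_abs). lra. }
  assert (hq : q * m <= Rabs q * r).
  { apply Rle_trans with (Rabs (q*m)). apply RRle_abs. rewrite Rabs_mult.
    apply Rmult_le_compat_l; auto. apply Rabs_pos. }
  assert (E : (- q * m) * (1 + S / r) / (S + r) = - (q * m) / r).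
  { field. lra. }
  rewrite E. unfold Rdiv.
  assert (q * m * / r <= Rabs q).
  { apply (Rmult_le_reg_r r); auto. rewrite Rmult_assoc, Rinv_l by lra. lra. }
  lra.
Qed.

Definition dreg (d : bool) (M x : R) : Prop := if d then M <= x else x <= M.
Definition evt (d : bool) (P : R -> Prop) := exists M, forall x, dreg d M x -> P x.

Lemma evt_and d P Q : evt d P -> evt d Q -> evt d (fun x => P x /\ Q x).
Proof.
  intros [M1 H1] [M2 H2]. destruct d.
  - exists (Rmax M1 M2). intros x hx; unfold dreg in *; split; [apply H1|apply H2]; unfold dreg;
    [apply Rle_trans with (Rmax M1 M2); auto; apply Rmax_l|apply Rle_trans with (Rmax M1 M2); auto; apply Rmax_r].
  - exists (Rmin M1 M2). intros x hx; unfold dreg in *; split; [apply H1|apply H2]; unfold dreg;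
    [apply Rle_trans with (Rmin M1 M2); auto; apply Rmin_l|apply Rle_trans with (Rmin M1 M2); auto; apply Rmin_r].
Qed.

Lemma evt_mono d (P Q : R -> Prop) : evt d P -> (forall x, P x -> Q x) -> evt d Q.
Proof. intros [M H] HPQ. exists M. auto. Qed.

Definition tends0 d f := forall eps, eps > 0 -> evt d (fun x => Rabs (f x) < eps).
Definition bnd d f := exists B, evt d (fun x => Rabs (f x) <= B).
Definition close d f h := tends0 d (fun x => f x - h x).

Lemma lim_pinf_t f l : lim_pinf f l -> tends0 true (fun x => f x - l).
Proof. intros H eps he. destruct (H eps he) as [M HM]. exists M. intros x hx. apply HM. unfold dreg in hx; lra. Qed.
Lemma lim_minf_t f l : lim_minf f l -> tends0 false (fun x => f x - l).
Proof. intros H eps he. destruct (H eps he) as [M HM]. exists M. intros x hx. apply HM. unfold dreg in hx; lra. Qed.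

Lemma tends0_ext d f g : (forall x, f x = g x) -> tends0 d f -> tends0 d g.
Proof. intros E H eps he. apply (evt_mono d _ _ (H eps he)). intros x; rewrite E; auto. Qed.

Lemma close_ext d f f' h h' : (forall x, f x = f' x) -> (forall x, h x = h' x) -> close d f h -> close d f' h'.
Proof. intros E1 E2. apply tends0_ext. intros; rewrite E1, E2; auto. Qed.

Lemma bnd_tends0 d f : tends0 d f -> bnd d f.
Proof. intros H. exists 1. apply (evt_mono d _ _ (H 1 Rlt_0_1)). intros; lra. Qed.

Lemma bnd_const d c : bnd d (fun _ => c).
Proof. exists (Rabs c). exists 0. intros; lra. Qed.

Lemma bnd_plus d f g : bnd d f -> bnd d g -> bnd d (fun x => f x + g x).
Proof.
  intros [B1 H1] [B2 H2]. exists (B1 + B2). apply (evt_mono d _ _ (evt_and d _ _ H1 H2)).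
  intros x [h1 h2]. apply Rle_trans with (Rabs (f x) + Rabs (g x)); [apply Rabs_triang|lra].
Qed.

Lemma bnd_mult d f g : bnd d f -> bnd d g -> bnd d (fun x => f x * g x).
Proof.
  intros [B1 H1] [B2 H2]. exists (B1 * B2). apply (evt_mono d _ _ (evt_and d _ _ H1 H2)).
  intros x [h1 h2]. rewrite Rabs_mult. apply Rmult_le_compat; auto; apply Rabs_pos.
Qed.

Lemma bnd_close d f h : close d f h -> bnd d h -> bnd d f.
Proof.
  intros H1 H2. assert (bnd d (fun x => (f x - h x) + h x)).
  { apply (bnd_plus d (fun x => f x - h x) h); auto. apply bnd_tends0; auto. }
  destruct H as [B HB]. exists B. apply (evt_mono d _ _ HB). intros x. replace (f x - h x + h x) with (f x) by ring. auto.
Qed.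

Lemma tends0_plus d f g : tends0 d f -> tends0 d g -> tends0 d (fun x => f x + g x).
Proof.
  intros H1 H2 eps he. apply (evt_mono d _ _ (evt_and d _ _ (H1 (eps/2) ltac:(lra)) (H2 (eps/2) ltac:(lra)))).
  intros x [h1 h2]. apply Rle_lt_trans with (Rabs (f x) + Rabs (g x)); [apply Rabs_triang|lra].
Qed.

Lemma tends0_mult d f g : tends0 d f -> bnd d g -> tends0 d (fun x => f x * g x).
Proof.
  intros H1 [B HB] eps he.
  set (B' := Rabs B + 1).
  assert (hB' : 0 < B') by (unfold B'; pose proof (Rabs_pos B); lra).
  apply (evt_mono d _ _ (evt_and d _ _ (H1 (eps / B') ltac:(apply Rdiv_lt_0_compat; lra)) HB)).
  intros x [h1 h2]. rewrite Rabs_mult.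
  assert (Rabs (g x) <= B') by (unfold B'; pose proof (Rle_abs B); lra).
  apply Rle_lt_trans with (Rabs (f x) * B').
  - apply Rmult_le_compat_l; try apply Rabs_pos; lra.
  - apply Rlt_le_trans with (eps / B' * B').
    + apply Rmult_lt_compat_r; lra.
    + unfold Rdiv. rewrite Rmult_assoc, Rinv_l by lra. lra.
Qed.

Lemma close_plus d f g h1 h2 : close d f h1 -> close d g h2 -> close d (fun x => f x + g x) (fun x => h1 x + h2 x).
Proof.
  intros H1 H2. unfold close. eapply tends0_ext; [|apply (tends0_plus d _ _ H1 H2)].
  intros; cbv beta; ring.
Qed.

Lemma close_minus d f g h1 h2 : close d f h1 -> close d g h2 -> close d (fun x => f x - g x) (fun x => h1 x - h2 x).
Proof.
  intros H1 H2. assert (H2' : close d (fun x => - g x) (fun x => - h2 x)).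
  { unfold close. eapply tends0_ext; [|apply (tends0_mult d _ (fun _ => -1) H2 (bnd_const d (-1)))].
    intros; cbv beta; ring. }
  eapply close_ext; [| |apply (close_plus d _ _ _ _ H1 H2')]; intros; cbv beta; ring.
Qed.

Lemma close_mult d f g h1 h2 : close d f h1 -> close d g h2 -> bnd d h1 -> bnd d h2 ->
  close d (fun x => f x * g x) (fun x => h1 x * h2 x).
Proof.
  intros H1 H2 B1 B2.
  assert (Bf : bnd d f) by (apply (bnd_close d f h1); auto).
  unfold close. eapply tends0_ext; [|apply tends0_plus;
     [apply (tends0_mult d _ _ H2 Bf)|apply (tends0_mult d _ _ H1 B2)]].
  intros; cbv beta; ring.
Qed.

Lemma close_refl d f : close d f f.
Proof. intros eps he. exists 0. intros. rewrite Rminus_diag, Rabs_R0; lra. Qed.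

Lemma close_const_mult d c f h : close d f h -> close d (fun x => c * f x) (fun x => c * h x).
Proof.
  intros H. unfold close. eapply tends0_ext; [|apply (tends0_mult d _ (fun _ => c) H (bnd_const d c))].
  intros; cbv beta; ring.
Qed.

Lemma close_tends0 d f h c : close d f h -> (forall x, h x = c) -> tends0 d (fun x => f x - c).
Proof. intros H E. eapply tends0_ext; [|apply H]. intros; cbv beta; rewrite E; auto. Qed.

Lemma bnd_cos d a : bnd d (fun x => cos (a * x)).
Proof. exists 1. exists 0. intros. apply Rabs_le. apply COS_bound. Qed.
Lemma bnd_sin d a : bnd d (fun x => sin (a * x)).
Proof. exists 1. exists 0. intros. apply Rabs_le. apply SIN_bound. Qed.

Lemma MVT_lim f f' a b : a < b -> (forall s, a <= s <= b -> derivable_pt_lim f s (f' s)) ->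
  exists c, a < c < b /\ f b - f a = f' c * (b - a).
Proof.
  intros hab HD.
  assert (pr1 : forall c, a < c < b -> derivable_pt f c).
  { intros c Hc. exists (f' c). apply HD; lra. }
  assert (pr2 : forall c, a < c < b -> derivable_pt id c).
  { intros c Hc. exists 1. apply derivable_pt_lim_id. }
  destruct (MVT f id a b pr1 pr2 hab) as [c [P HP]].
  - intros c Hc. apply derivable_continuous_pt. exists (f' c). apply HD; auto.
  - intros c Hc. apply derivable_continuous_pt. exists 1. apply derivable_pt_lim_id.
  - rewrite (derive_pt_eq_0 f c (f' c) (pr1 c P)) in HP by (apply HD; lra).
    rewrite (derive_pt_eq_0 id c 1 (pr2 c P)) in HP by apply derivable_pt_lim_id.
    unfold id in HP. exists c. split; auto. lra.
Qed.

Lemma dlim d v dv : (forall x, derivable_pt_lim v x (dv x)) -> tends0 d v ->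
  (forall eps, eps > 0 -> exists M, forall x t, x <= t <= x + 1 ->
      (if d then M <= x else t <= M) -> Rabs (dv t - dv x) <= eps) ->
  tends0 d dv.
Proof.
  intros HD Hv Hosc eps he.
  destruct (Hv (eps/3) ltac:(lra)) as [M1 HM1].
  destruct (Hosc (eps/3) ltac:(lra)) as [M2 HM2].
  destruct d.
  - exists (Rmax M1 M2). intros x hx. unfold dreg in hx.
    assert (h1 : M1 <= x) by (apply Rle_trans with (Rmax M1 M2); auto; apply Rmax_l).
    assert (h2 : M2 <= x) by (apply Rle_trans with (Rmax M1 M2); auto; apply Rmax_r).
    destruct (MVT_lim v dv x (x+1) ltac:(lra) (fun s _ => HD s)) as [c [hc Hc]].
    assert (a1 : Rabs (v x) < eps/3) by (apply HM1; unfold dreg; lra).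
    assert (a2 : Rabs (v (x+1)) < eps/3) by (apply HM1; unfold dreg; lra).
    assert (a3 : Rabs (dv c - dv x) <= eps/3) by (apply HM2; lra).
    replace (x + 1 - x) with 1 in Hc by ring.
    apply Rabs_def2 in a1; apply Rabs_def2 in a2; apply Rabs_le_inv in a3 || idtac.
    apply Rabs_def1; unfold Rabs in a3; destruct (Rcase_abs (dv c - dv x)); lra.
  - exists (Rmin M1 M2). intros x hx. unfold dreg in hx.
    assert (h1 : x <= M1) by (apply Rle_trans with (Rmin M1 M2); auto; apply Rmin_l).
    assert (h2 : x <= M2) by (apply Rle_trans with (Rmin M1 M2); auto; apply Rmin_r).
    destruct (MVT_lim v dv (x-1) x ltac:(lra) (fun s _ => HD s)) as [c [hc Hc]].
    assert (a1 : Rabs (v x) < eps/3) by (apply HM1; unfold dreg; lra).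
    assert (a2 : Rabs (v (x-1)) < eps/3) by (apply HM1; unfold dreg; lra).
    assert (a3 : Rabs (dv x - dv c) <= eps/3) by (apply HM2; lra).
    replace (x - (x - 1)) with 1 in Hc by ring.
    apply Rabs_def2 in a1; apply Rabs_def2 in a2.
    apply Rabs_def1; unfold Rabs in a3; destruct (Rcase_abs (dv x - dv c)); lra.
Qed.

Lemma RI_nonneg f a b (pr : Riemann_integrable f a b) : a <= b ->
  (forall x, a < x < b -> 0 <= f x) -> 0 <= RiemannInt pr.
Proof.
  intros hab H. replace 0 with (0 * (b - a)) by ring. rewrite <- (RiemannInt_P15 (RiemannInt_P14 a b 0)).
  apply RiemannInt_P19; auto; intros x hx; unfold fct_cte; auto.
Qed.

From Stdlib Require Import Classical.

Lemma tail_p f M0 B :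
  (forall b, M0 <= b -> exists pr : Riemann_integrable (fun t => Rabs (f t)) M0 b, RiemannInt pr <= B) ->
  forall eps, eps > 0 -> exists M, forall x t, M <= x <= t ->
    exists pr : Riemann_integrable (fun s => Rabs (f s)) x t, RiemannInt pr <= eps.
Proof.
  intros H eps he.
  set (E := fun y => exists b, M0 <= b /\ exists pr : Riemann_integrable (fun t => Rabs (f t)) M0 b, y = RiemannInt pr).
  assert (Eb : bound E).
  { exists B. intros y [b [hb [pr ->]]]. destruct (H b hb) as [pr' h]. rewrite (RiemannInt_P5 pr pr'). auto. }
  assert (Ene : exists y, E y).
  { destruct (H M0 (Rle_refl _)) as [pr _]. exists (RiemannInt pr). exists M0. split; [lra|]. exists pr; auto. }
  destruct (completeness E Eb Ene) as [L [HLub HLleast]].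
  destruct (classic (exists y, E y /\ y > L - eps)) as [[y [[b0 [hb0 [pr0 Hy]]] hy]]|hn].
  - exists b0. intros x t [hx ht].
    destruct (H t ltac:(lra)) as [prt _].
    assert (prxt := RiemannInt_P23 prt (conj (Rle_trans _ _ _ hb0 hx) ht)).
    assert (pr0x := RiemannInt_P22 prt (conj (Rle_trans _ _ _ hb0 hx) ht)).
    assert (prbx := RiemannInt_P23 pr0x (conj hb0 hx)).
    exists prxt.
    assert (e1 := RiemannInt_P26 pr0x prxt prt).
    assert (e2 := RiemannInt_P26 pr0 prbx pr0x).
    assert (n1 : 0 <= RiemannInt prbx) by (apply RI_nonneg; auto; intros; apply Rabs_pos).
    assert (n2 : RiemannInt prt <= L).
    { apply HLub. exists t. split; [lra|]. exists prt; auto. }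
    lra.
  - exfalso. assert (L <= L - eps); [|lra].
    apply HLleast. intros y Ey. destruct (Rle_dec y (L - eps)); auto.
    exfalso. apply hn. exists y. split; auto. lra.
Qed.

Lemma tail_m f M0 B :
  (forall a, a <= M0 -> exists pr : Riemann_integrable (fun t => Rabs (f t)) a M0, RiemannInt pr <= B) ->
  forall eps, eps > 0 -> exists M, forall x t, x <= t <= M ->
    exists pr : Riemann_integrable (fun s => Rabs (f s)) x t, RiemannInt pr <= eps.
Proof.
  intros H eps he.
  set (E := fun y => exists a, a <= M0 /\ exists pr : Riemann_integrable (fun t => Rabs (f t)) a M0, y = RiemannInt pr).
  assert (Eb : bound E).
  { exists B. intros y [b [hb [pr ->]]]. destruct (H b hb) as [pr' h]. rewrite (RiemannInt_P5 pr pr'). auto. }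
  assert (Ene : exists y, E y).
  { destruct (H M0 (Rle_refl _)) as [pr _]. exists (RiemannInt pr). exists M0. split; [lra|]. exists pr; auto. }
  destruct (completeness E Eb Ene) as [L [HLub HLleast]].
  destruct (classic (exists y, E y /\ y > L - eps)) as [[y [[a0 [ha0 [pr0 Hy]]] hy]]|hn].
  - exists a0. intros x t [hx ht].
    destruct (H x ltac:(lra)) as [prx _].
    assert (prxt := RiemannInt_P22 prx (conj hx (Rle_trans _ _ _ ht ha0))).
    assert (prt0 := RiemannInt_P23 prx (conj hx (Rle_trans _ _ _ ht ha0))).
    assert (prta := RiemannInt_P22 prt0 (conj ht ha0)).
    exists prxt.
    assert (e1 := RiemannInt_P26 prxt prt0 prx).
    assert (e2 := RiemannInt_P26 prta pr0 prt0).
    assert (n1 : 0 <= RiemannInt prta) by (apply RI_nonneg; auto; intros; apply Rabs_pos).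
    assert (n2 : RiemannInt prx <= L).
    { apply HLub. exists x. split; [lra|]. exists prx; auto. }
    lra.
  - exfalso. assert (L <= L - eps); [|lra].
    apply HLleast. intros y Ey. destruct (Rle_dec y (L - eps)); auto.
    exfalso. apply hn. exists y. split; auto. lra.
Qed.

Lemma tailI_p f I : improper_integral_R f I -> forall eps, eps > 0 -> exists M, forall x t, M <= x <= t ->
   forall pr : Riemann_integrable f x t, RiemannInt pr <= eps.
Proof.
  intros [Hint HI] eps he. destruct (HI (eps/2) ltac:(lra)) as [M HM].
  exists M. intros x t [hx ht] pr.
  set (a := Rmin (- M) x).
  assert (ha1 : a <= - M) by apply Rmin_l. assert (ha2 : a <= x) by apply Rmin_r.
  destruct (Hint a x ha2) as [pr1]. destruct (Hint a t ltac:(lra)) as [pr2].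
  assert (e := RiemannInt_P26 pr1 pr pr2).
  assert (h1 := HM a x ha1 hx pr1). assert (h2 := HM a t ha1 ltac:(lra) pr2).
  apply Rabs_def2 in h1. apply Rabs_def2 in h2. lra.
Qed.

Lemma tailI_m f I : improper_integral_R f I -> forall eps, eps > 0 -> exists M, forall x t, x <= t <= M ->
   forall pr : Riemann_integrable f x t, RiemannInt pr <= eps.
Proof.
  intros [Hint HI] eps he. destruct (HI (eps/2) ltac:(lra)) as [M HM].
  exists (- M). intros x t [hx ht] pr.
  set (b := Rmax M t).
  assert (hb1 : M <= b) by apply Rmax_l. assert (hb2 : t <= b) by apply Rmax_r.
  destruct (Hint t b hb2) as [pr1]. destruct (Hint x b ltac:(lra)) as [pr2].
  assert (e := RiemannInt_P26 pr pr1 pr2).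
  assert (h1 := HM t b ltac:(lra) hb1 pr1). assert (h2 := HM x b ltac:(lra) hb1 pr2).
  apply Rabs_def2 in h1. apply Rabs_def2 in h2. lra.
Qed.

Lemma I_bound f I : improper_integral_R f I -> (forall x, 0 <= f x) ->
  forall a b (pr : Riemann_integrable f a b), a <= b -> RiemannInt pr <= I.
Proof.
  intros [Hint HI] Hnn a b pr hab.
  apply Rnot_lt_le. intros hlt.
  set (eps := RiemannInt pr - I).
  destruct (HI eps ltac:(unfold eps; lra)) as [M HM].
  set (a' := Rmin a (- M)). set (b' := Rmax b M).
  assert (h1 : a' <= a) by apply Rmin_l. assert (h2 : a' <= - M) by apply Rmin_r.
  assert (h3 : b <= b') by apply Rmax_l. assert (h4 : M <= b') by apply Rmax_r.
  destruct (Hint a' a h1) as [pra]. destruct (Hint b b' h3) as [prb].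
  destruct (Hint a' b ltac:(lra)) as [prab]. destruct (Hint a' b' ltac:(lra)) as [prall].
  assert (e1 := RiemannInt_P26 pra pr prab). assert (e2 := RiemannInt_P26 prab prb prall).
  assert (n1 : 0 <= RiemannInt pra) by (apply RI_nonneg; auto).
  assert (n2 : 0 <= RiemannInt prb) by (apply RI_nonneg; auto).
  assert (hh := HM a' b' h2 h4 prall). apply Rabs_def2 in hh. unfold eps in hh. lra.
Qed.

Definition mcomb (d : bool) a b := if d then Rmax a b else Rmin a b.
Definition pcnd (d : bool) M x t := if d then M <= x else t <= M.

Lemma dreg_comb d a b s : dreg d (mcomb d a b) s -> dreg d a s /\ dreg d b s.
Proof.
  unfold dreg, mcomb; destruct d; intros h.
  - pose proof (Rmax_l a b); pose proof (Rmax_r a b); split; lra.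
  - pose proof (Rmin_l a b); pose proof (Rmin_r a b); split; lra.
Qed.

Lemma pcnd_comb d a b x t : pcnd d (mcomb d a b) x t -> pcnd d a x t /\ pcnd d b x t.
Proof.
  unfold pcnd, mcomb; destruct d; intros h.
  - pose proof (Rmax_l a b); pose proof (Rmax_r a b); split; lra.
  - pose proof (Rmin_l a b); pose proof (Rmin_r a b); split; lra.
Qed.

Lemma pcnd_reg d M x t s : x <= s <= t -> pcnd d M x t -> dreg d M s.
Proof. unfold pcnd, dreg; destruct d; intros; lra. Qed.

Lemma inv_sq_bound j : 1/2 <= j <= 2 -> Rabs (/ j ^ 2 - j ^ 2) <= 60 * Rabs (j - 1).
Proof.
  intros hj.
  assert (E : / j ^ 2 - j ^ 2 = (1 - j) * ((1 + j) * (1 + j^2) * / j ^ 2)) by (field; lra).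
  rewrite E, Rabs_mult. rewrite <- Rabs_Ropp, Ropp_minus_distr.
  assert (hy : 0 < / j ^ 2 <= 4).
  { split. apply Rinv_0_lt_compat; nra. apply (Rmult_le_reg_l (j^2)); [nra|]. rewrite Rinv_r by nra. nra. }
  rewrite (Rabs_right ((1 + j) * (1 + j ^ 2) * / j ^ 2)).
  - assert ((1 + j) * (1 + j ^ 2) * / j ^ 2 <= 60).
    { assert ((1 + j) * (1 + j ^ 2) <= 15) by nra. nra. }
    pose proof (Rabs_pos (j - 1)). nra.
  - apply Rle_ge. apply Rmult_le_pos; [nra|lra].
Qed.

Lemma tends0_opp d f : tends0 d f -> tends0 d (fun x => - f x).
Proof. intros H eps he. apply (evt_mono d _ _ (H eps he)). intros x; rewrite Rabs_Ropp; auto. Qed.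

Lemma bnd_minus d f g : bnd d f -> bnd d g -> bnd d (fun x => f x - g x).
Proof.
  intros [B1 H1] [B2 H2]. exists (B1 + B2). apply (evt_mono d _ _ (evt_and d _ _ H1 H2)).
  intros x [h1 h2]. unfold Rminus. apply Rle_trans with (Rabs (f x) + Rabs (- g x)); [apply Rabs_triang|].
  rewrite Rabs_Ropp; lra.
Qed.


Lemma lim_le_cont F H : continuity_pt F 0 -> continuity_pt H 0 ->
  (forall d, 0 < d <= 1 -> F d <= H d) -> F 0 <= H 0.
Proof.
  intros CF CH Hle. apply Rnot_lt_le. intros hlt.
  set (e := (F 0 - H 0) / 2).
  assert (he : e > 0) by (unfold e; lra).
  destruct (CF e he) as [a1 [ha1 Ha1]]. destruct (CH e he) as [a2 [ha2 Ha2]].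
  set (d := Rmin 1 (Rmin (a1/2) (a2/2))).
  assert (hd : 0 < d <= 1).
  { unfold d. split. apply Rmin_glb_lt; [lra|apply Rmin_glb_lt; lra]. apply Rmin_l. }
  assert (hd1 : d <= a1/2) by (unfold d; eapply Rle_trans; [apply Rmin_r|apply Rmin_l]).
  assert (hd2 : d <= a2/2) by (unfold d; eapply Rle_trans; [apply Rmin_r|apply Rmin_r]).
  assert (h1 : Rabs (F d - F 0) < e).
  { apply (Ha1 d). split. unfold D_x, no_cond; split; auto; lra.
    simpl. unfold R_dist. rewrite Rminus_0_r, Rabs_right; lra. }
  assert (h2 : Rabs (H d - H 0) < e).
  { apply (Ha2 d). split. unfold D_x, no_cond; split; auto; lra.
    simpl. unfold R_dist. rewrite Rminus_0_r, Rabs_right; lra. }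
  apply Rabs_def2 in h1. apply Rabs_def2 in h2. specialize (Hle d hd). unfold e in *. lra.
Qed.

Lemma final_alg R T I : 0 <= R -> T = 1 - R -> 1 + R + sqrt (4 * R) <= T * exp I ->
  T >= 1 / (cosh (I / 2)) ^ 2.
Proof.
  intros hR hT hF.
  set (s := sqrt R).
  assert (hs : 0 <= s) by apply sqrt_pos.
  assert (hs2 : s * s = R) by (apply sqrt_sqrt; auto).
  assert (h4 : sqrt (4 * R) = 2 * s).
  { rewrite sqrt_mult by lra. replace 4 with (2*2) by ring. rewrite sqrt_square by lra. reflexivity. }
  rewrite h4 in hF.
  set (e := exp (I / 2)).
  assert (he : 0 < e) by apply exp_pos.
  assert (hz : exp I = e * e).
  { unfold e. rewrite <- exp_plus. f_equal. field. }
  assert (hm : exp (- (I / 2)) = / e).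
  { unfold e. rewrite exp_Ropp. reflexivity. }
  set (z := e * e). assert (hzpos : 0 < z) by (unfold z; nra).
  rewrite hz in hF. fold z in hF.
  assert (hcosh : cosh (I / 2) ^ 2 = (z + 2 + / z) / 4).
  { unfold cosh. fold e. rewrite hm. unfold z. field. lra. }
  rewrite hcosh.
  assert (hA : 0 < 1 - s).
  { destruct (Rlt_le_dec s 1); [lra|]. exfalso. subst T. rewrite <- hs2 in hF. assert (1 - s*s <= 0) by nra. assert ((1 - s*s)*z <= 0) by nra. nra. }
  assert (hB : 0 < 1 + s) by lra.
  assert (hzA : (1 - s) * z >= 1 + s).
  { subst T. rewrite <- hs2 in hF.
    assert ((1 + s) * (1 + s) <= (1 + s) * ((1 - s) * z)) by nra.
    apply Rle_ge. apply (Rmult_le_reg_l (1 + s)); auto; nra. }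
  assert (hzB : (1 + s) * z >= 1 - s).
  { assert (z >= 1).
    { apply Rle_ge. apply (Rmult_le_reg_l (1 - s)); auto. nra. }
    nra. }
  assert (key : (1 - s) * (1 + s) * (z + 1) ^ 2 - 4 * z = ((1 - s) * z - (1 + s)) * ((1 + s) * z - (1 - s))) by ring.
  assert (0 <= ((1 - s) * z - (1 + s)) * ((1 + s) * z - (1 - s))) by (apply Rmult_le_pos; lra).
  subst T. rewrite <- hs2.
  apply Rle_ge.
  assert (ez : z + 2 + / z = (z + 1) ^ 2 / z) by (field; lra).
  rewrite ez.
  assert (hz1 : 0 < (z + 1) ^ 2) by nra.
  replace (1 / ((z + 1) ^ 2 / z / 4)) with (4 * z / (z + 1) ^ 2) by (field; lra).
  apply (Rmult_le_reg_r ((z + 1) ^ 2)); [nra|].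
  unfold Rdiv. rewrite Rmult_assoc, Rinv_l by nra. nra.
Qed.

Lemma const_tends d f c v : tends0 d (fun x => f x - v) -> (forall x, f x = c) -> c = v.
Proof.
  intros H E. destruct (Req_dec c v) as [|hne]; auto. exfalso.
  assert (he : Rabs (c - v) > 0) by (apply Rabs_pos_lt; lra).
  destruct (H _ he) as [M HM].
  assert (h := HM M ltac:(unfold dreg; destruct d; lra)). rewrite E in h. lra.
Qed.

Lemma mono_h a b c dl : 0 <= a <= b -> a + sqrt (a ^ 2 - c + dl) <= b + sqrt (b ^ 2 - c + dl).
Proof.
  intros h. assert (sqrt (a ^ 2 - c + dl) <= sqrt (b ^ 2 - c + dl)) by (apply sqrt_le_1_alt; nra). lra.
Qed.

Lemma exp_le a b : a <= b -> exp a <= exp b.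
Proof. intros h. destruct h as [h|h]. apply Rlt_le, exp_increasing; auto. subst; lra. Qed.

Section Main.
Variables (k2 : R -> R) (kinf : R)
  (Hkinf : kinf > 0)
  (Hpc : piecewise_continuous k2)
  (Hlimp : lim_pinf k2 (kinf ^ 2))
  (Hlimm : lim_minf k2 (kinf ^ 2))
  (Hintp : integrable_near_pinf (fun x => k2 x - kinf ^ 2))
  (Hintm : integrable_near_minf (fun x => k2 x - kinf ^ 2))
  (u1 u2 du1 du2 : R -> R) (r1 r2 t1 t2 : R)
  (Hu1 : solves_ode k2 u1 du1)
  (Hu2 : solves_ode k2 u2 du2)
  (Hm1 : lim_minf (fun x => u1 x - (cos (kinf * x) + r1 * cos (kinf * x) + r2 * sin (kinf * x))) 0)
  (Hm2 : lim_minf (fun x => u2 x - (sin (kinf * x) + r2 * cos (kinf * x) - r1 * sin (kinf * x))) 0)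
  (Hp1 : lim_pinf (fun x => u1 x - (t1 * cos (kinf * x) - t2 * sin (kinf * x))) 0)
  (Hp2 : lim_pinf (fun x => u2 x - (t1 * sin (kinf * x) + t2 * cos (kinf * x))) 0)
  (J J1 J2 : R -> R)
  (HJ1 : forall x, derivable_pt_lim J x (J1 x))
  (HJ2 : forall x, derivable_pt_lim J1 x (J2 x))
  (HJ2c : continuity J2)
  (HJpos : forall x, J x > 0)
  (HJp : lim_pinf J 1)
  (HJm : lim_minf J 1)
  (I : R)
  (HI : improper_integral_R
          (fun x => Rabs (J x ^ 2 / kinf * (k2 x + J2 x / J x) - kinf / J x ^ 2)) I).

Definition q x := J x ^ 2 / kinf * (k2 x + J2 x / J x) - kinf / J x ^ 2.
Definition p1 x := (J x * du1 x - J1 x * u1 x) / kinf.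
Definition p2 x := (J x * du2 x - J1 x * u2 x) / kinf.
Definition Sen x := ((u1 x / J x) ^ 2 + (u2 x / J x) ^ 2 + p1 x ^ 2 + p2 x ^ 2) / 2.
Definition Wr x := (u1 x * du2 x - u2 x * du1 x) / kinf.
Definition G eps x := Sen x + sqrt (Sen x ^ 2 - Wr x ^ 2 + eps).

Lemma Jne x : J x <> 0.
Proof. specialize (HJpos x); lra. Qed.

Lemma cont_of_D f df x : derivable_pt_lim f x df -> continuity_pt f x.
Proof. intros H. apply derivable_continuous_pt. exists df. exact H. Qed.

Lemma du_piece (u du : R -> R) (Hu : solves_ode k2 u du) a b g (hab : a <= b)
  (Hg : forall t, a <= t <= b -> continuity_pt g t) (Heq : forall t, a < t < b -> k2 t = g t) :
  exists D : R -> R, (forall s, a <= s <= b -> du s = D s) /\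
     (forall s, a <= s <= b -> derivable_pt_lim D s (-(g s * u s))).
Proof.
  assert (C0 : forall t, a <= t <= b -> continuity_pt (fun y => g y * u y) t).
  { intros t Ht. apply (Cmult g u); auto. apply (cont_of_D u (du t)). apply Hu. }
  set (P := primitive hab (FTC_P1 hab C0)).
  assert (HP : forall s (h1 : a <= s) (h2 : s <= b), P s = RiemannInt (FTC_P1 hab C0 h1 h2)).
  { intros s h1 h2. unfold P, primitive. destruct (Rle_dec a s); [|contradiction].
    destruct (Rle_dec s b); [|contradiction]. apply RiemannInt_P5. }
  exists (fun s => du a - (P s - P a)). split.
  - intros s [h1 h2]. destruct (proj2 Hu a s h1) as [pr Hpr].
    rewrite (HP s h1 h2), (HP a (Rle_refl a) hab), RiemannInt_P9.
    assert (RiemannInt pr = RiemannInt (FTC_P1 hab C0 h1 h2)).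
    { apply RiemannInt_P18; auto. intros x Hx. rewrite Heq; auto; lra. }
    lra.
  - intros s Hs. eapply Dval. Dtac.
    apply (RiemannInt_P28 (f:=fun y => g y * u y) (a:=a) (b:=b) (x:=s) hab C0 Hs).
    ring.
Qed.


Lemma piece a b g (hab : a < b)
  (Hg : forall t, a <= t <= b -> continuity_pt g t) (Heq : forall t, a < t < b -> k2 t = g t) :
  Wr a = Wr b /\ forall eps, eps > 0 ->
    forall pr : Riemann_integrable (fun x => Rabs (q x)) a b,
      ln (G eps a) <= ln (G eps b) + RiemannInt pr.
Proof.
  assert (hab' : a <= b) by lra.
  destruct (du_piece u1 du1 Hu1 a b g hab' Hg Heq) as [D1 [E1 HD1]].
  destruct (du_piece u2 du2 Hu2 a b g hab' Hg Heq) as [D2 [E2 HD2]].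
  assert (hk : kinf <> 0) by lra.
  assert (HU1 : forall s, a <= s <= b -> derivable_pt_lim u1 s (D1 s)).
  { intros s Hs. rewrite <- E1; auto. apply Hu1. }
  assert (HU2 : forall s, a <= s <= b -> derivable_pt_lim u2 s (D2 s)).
  { intros s Hs. rewrite <- E2; auto. apply Hu2. }
  set (pc1 := fun y => (J y * D1 y - J1 y * u1 y) / kinf).
  set (pc2 := fun y => (J y * D2 y - J1 y * u2 y) / kinf).
  set (Sc := fun y => ((u1 y / J y) ^ 2 + (u2 y / J y) ^ 2 + pc1 y ^ 2 + pc2 y ^ 2) / 2).
  set (Wc := fun y => (u1 y * D2 y - u2 y * D1 y) / kinf).
  set (qc := fun y => J y ^ 2 / kinf * (g y + J2 y / J y) - kinf / J y ^ 2).
  set (m := fun y => (u1 y / J y) * pc1 y + (u2 y / J y) * pc2 y).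
  assert (Dpc1 : forall s, a <= s <= b -> derivable_pt_lim pc1 s (-(J s * g s + J2 s) * u1 s / kinf)).
  { intros s Hs. eapply Dval. unfold pc1. Dtac; eauto. cbv beta. field; auto. }
  assert (Dpc2 : forall s, a <= s <= b -> derivable_pt_lim pc2 s (-(J s * g s + J2 s) * u2 s / kinf)).
  { intros s Hs. eapply Dval. unfold pc2. Dtac; eauto. cbv beta. field; auto. }
  assert (DSc : forall s, a <= s <= b -> derivable_pt_lim Sc s (- qc s * m s)).
  { intros s Hs. eapply Dval. unfold Sc. Dtac; eauto; try apply Jne.
    cbv beta. unfold qc, m, pc1, pc2. field; repeat split; try apply Jne; try lra. }
  assert (DWc : forall s, a <= s <= b -> derivable_pt_lim Wc s 0).
  { intros s Hs. eapply Dval. unfold Wc. Dtac; eauto.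
    cbv beta. field; auto. }
  split.
  - assert (Wc a = Wc b) by (apply const_deriv; auto).
    unfold Wr, Wc in *. rewrite !E1, !E2; auto; lra.
  - intros eps heps pr.
    assert (HJc : forall s, continuity_pt J s) by (intros; apply (cont_of_D J (J1 s)); auto).
    assert (Cq : forall s, a <= s <= b -> continuity_pt (fun y => Rabs (qc y)) s).
    { intros s Hs. unfold qc. Ctac; auto; try apply Jne; try lra.
      apply pow_nonzero, Jne. }
    set (PQ := primitive hab' (FTC_P1 hab' Cq)).
    set (Gc := fun y => Sc y + sqrt (Sc y ^ 2 - Wc y ^ 2 + eps)).
    assert (Hpos : forall s, a <= s <= b -> 0 <= Sc s /\ Sc s ^ 2 - Wc s ^ 2 >= m s ^ 2).
    { intros s Hs. split.
      - unfold Sc. assert (0 <= (u1 s / J s)^2) by apply pow2_ge_0.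
        assert (0 <= (u2 s / J s)^2) by apply pow2_ge_0.
        assert (0 <= (pc1 s)^2) by apply pow2_ge_0.
        assert (0 <= (pc2 s)^2) by apply pow2_ge_0. lra.
      - assert (EW : Wc s = (u1 s / J s) * pc2 s - (u2 s / J s) * pc1 s).
        { unfold Wc, pc1, pc2. field. split; auto; apply Jne. }
        rewrite EW. unfold Sc, m. apply alg_SW. }
    set (KF := fun s => (- qc s * m s) * (1 + Sc s / sqrt (Sc s ^ 2 - Wc s ^ 2 + eps))
                 / (Sc s + sqrt (Sc s ^ 2 - Wc s ^ 2 + eps)) + Rabs (qc s)).
    assert (DF : forall s, a <= s <= b -> derivable_pt_lim (fun y => ln (Gc y) + PQ y) s (KF s)).
    { intros s Hs. destruct (Hpos s Hs) as [h1 h2].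
      assert (hp : 0 < Sc s ^ 2 - Wc s ^ 2 + eps) by nra.
      assert (hr : 0 < sqrt (Sc s ^ 2 - Wc s ^ 2 + eps)) by (apply sqrt_lt_R0; lra).
      eapply Dval. unfold Gc. Dtac.
      - apply DSc; auto.
      - apply DSc; auto.
      - apply DWc; auto.
      - exact hp.
      - cbv beta. lra.
      - apply (RiemannInt_P28 (f:=fun y => Rabs (qc y)) (a:=a) (b:=b) (x:=s) hab' Cq Hs).
      - cbv beta. unfold KF. field. lra. }
    assert (Hm : (fun y => ln (Gc y) + PQ y) a <= (fun y => ln (Gc y) + PQ y) b).
    { apply (mono_deriv (fun y => ln (Gc y) + PQ y) KF a b); auto. intros s Hs. unfold KF.
      destruct (Hpos s ltac:(lra)) as [h1 h2]. apply key_ineq; auto. }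
    cbv beta in Hm.
    assert (HSa : forall s, a <= s <= b -> G eps s = Gc s).
    { intros s Hs. unfold G, Gc, Sen, Sc, Wr, Wc, p1, p2, pc1, pc2. rewrite E1, E2; auto. }
    rewrite HSa, HSa by lra.
    assert (EPQ : RiemannInt pr = PQ b - PQ a).
    { unfold PQ. rewrite <- (RiemannInt_P20 hab' (FTC_P1 hab' Cq) (FTC_P1 hab' Cq hab' (Rle_refl b))).
      apply RiemannInt_P18; auto. intros x Hx. unfold q, qc. rewrite Heq; auto. }
    lra.
Qed.

Lemma int_q a b : a <= b -> inhabited (Riemann_integrable (fun x => Rabs (q x)) a b).
Proof. intros h. exact (proj1 HI a b h). Qed.

Lemma global a b : a <= b ->
  Wr a = Wr b /\ forall eps, eps > 0 ->
    forall pr : Riemann_integrable (fun x => Rabs (q x)) a b,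
      ln (G eps a) <= ln (G eps b) + RiemannInt pr.
Proof.
  intros hab. destruct (Req_dec a b) as [<-|hne].
  { split; auto. intros eps he pr. rewrite RiemannInt_P9. lra. }
  assert (hlt : a < b) by lra.
  destruct (Hpc a b hlt) as [n [x [Hx0 [Hxn [Hinc Hpieces]]]]].
  assert (Claim : forall i, (i <= n)%nat -> a <= x i /\ Wr a = Wr (x i) /\ forall eps, eps > 0 -> forall pr : Riemann_integrable (fun t => Rabs (q t)) a (x i),
      ln (G eps a) <= ln (G eps (x i)) + RiemannInt pr).
  { induction i as [|i IH]; intros hi.
    - rewrite Hx0. split; [lra|]. split; auto. intros eps he pr. rewrite RiemannInt_P9. lra.
    - destruct (IH ltac:(lia)) as [ha [hW hG]].
      assert (hi' : (i < n)%nat) by lia.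
      specialize (Hinc i hi'). destruct (Hpieces i hi') as [g [Hg Heq]].
      assert (Heq' : forall t, x i < t < x (S i) -> k2 t = g t) by (intros; apply Heq; auto).
      destruct (piece (x i) (x (S i)) g Hinc Hg Heq') as [pW pG].
      split; [lra|]. split; [congruence|].
      intros eps he pr.
      destruct (int_q a (x i) ha) as [pr1].
      destruct (int_q (x i) (x (S i)) ltac:(lra)) as [pr2].
      rewrite <- (RiemannInt_P26 pr1 pr2 pr).
      specialize (hG eps he pr1). specialize (pG eps he pr2). lra. }
  destruct (Claim n (Nat.le_refl n)) as [_ [hW hG]]. rewrite Hxn in hW, hG. auto.
Qed.

Lemma locest_u u du A dA (Hu : solves_ode k2 u du)
  (HA : forall x, derivable_pt_lim A x (dA x))
  (HdA : forall x, derivable_pt_lim dA x (- (kinf ^ 2 * A x)))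
  x t Bu eta tau : x <= t ->
  (forall s, x <= s <= t -> Rabs (u s) <= Bu) ->
  (forall s, x <= s <= t -> Rabs (u s - A s) <= eta) ->
  forall pr : Riemann_integrable (fun s => Rabs (k2 s - kinf ^ 2)) x t, RiemannInt pr <= tau ->
  Rabs ((du t - dA t) - (du x - dA x)) <= Bu * tau + kinf ^ 2 * eta * (t - x).
Proof.
  intros hxt HB Heta pr Hpr.
  assert (hBu : 0 <= Bu) by (apply Rle_trans with (Rabs (u x)); [apply Rabs_pos|apply HB; lra]).
  destruct (proj2 Hu x t hxt) as [pr1 E1].
  set (phi := fun s => - (kinf ^ 2 * A s)).
  assert (Cphi : forall s, x <= s <= t -> continuity_pt phi s).
  { intros s _. unfold phi. assert (continuity_pt A s) by (apply (cont_of_D A (dA s)); auto).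
    assert (E: (fun s0 => - (kinf ^ 2 * A s0)) = (fun s0 => (0 - kinf^2) * A s0)).
    { apply functional_extensionality; intros; ring. } rewrite E. Ctac; auto. }
  assert (prA := continuity_implies_RiemannInt hxt Cphi).
  assert (E2 : RiemannInt prA = dA t - dA x) by (apply FTC; auto).
  assert (prh := RiemannInt_P10 1 pr1 prA).
  assert (E3 := RiemannInt_P13 pr1 prA prh).
  assert (prh2 := RiemannInt_P16 prh).
  assert (E4 := RiemannInt_P17 prh prh2 hxt).
  assert (prB := RiemannInt_P10 Bu (RiemannInt_P14 x t (kinf ^ 2 * eta)) pr).
  assert (E5 := RiemannInt_P13 (RiemannInt_P14 x t (kinf ^ 2 * eta)) pr prB).
  rewrite RiemannInt_P15 in E5.
  assert (E6 : RiemannInt prh2 <= RiemannInt prB).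
  { apply RiemannInt_P19; auto. intros s hs. unfold fct_cte, phi.
    replace (k2 s * u s + 1 * - (kinf ^ 2 * A s)) with ((k2 s - kinf^2) * u s + kinf^2 * (u s - A s)) by ring.
    apply Rle_trans with (Rabs ((k2 s - kinf^2) * u s) + Rabs (kinf^2 * (u s - A s))); [apply Rabs_triang|].
    rewrite !Rabs_mult. rewrite (Rabs_right (kinf^2)) by (apply Rle_ge, pow2_ge_0).
    assert (Rabs (k2 s - kinf ^ 2) * Rabs (u s) <= Rabs (k2 s - kinf ^ 2) * Bu)
      by (apply Rmult_le_compat_l; [apply Rabs_pos|apply HB; lra]).
    assert (kinf ^ 2 * Rabs (u s - A s) <= kinf^2 * eta)
      by (apply Rmult_le_compat_l; [apply pow2_ge_0|apply Heta; lra]).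
    lra. }
  assert (Bu * RiemannInt pr <= Bu * tau) by (apply Rmult_le_compat_l; auto).
  replace ((du t - dA t) - (du x - dA x)) with (- RiemannInt prh).
  - rewrite Rabs_Ropp. lra.
  - rewrite E3, E2. lra.
Qed.

Lemma J2_bound s eta : 1/2 <= J s <= 2 -> Rabs (/ J s ^ 2 - J s ^ 2) <= eta ->
  Rabs (J2 s) <= 2 * kinf ^ 2 * eta + 2 * kinf * (Rabs (q s) + / kinf * Rabs (k2 s - kinf ^ 2)).
Proof.
  intros [hj1 hj2] he. set (j := J s) in *.
  assert (hk : kinf <> 0) by lra.
  assert (E : J2 s = (kinf * q s + kinf^2 * (/ j^2 - j^2) - j^2 * (k2 s - kinf^2)) * / j).
  { unfold q. fold j. field. split; auto. unfold j; apply Jne. }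
  rewrite E, Rabs_mult, Rabs_inv, (Rabs_right j) by lra.
  assert (hN : Rabs (kinf * q s + kinf^2 * (/ j^2 - j^2) - j^2 * (k2 s - kinf^2))
     <= kinf * Rabs (q s) + kinf^2 * eta + j^2 * Rabs (k2 s - kinf^2)).
  { unfold Rminus at 2. eapply Rle_trans; [apply Rabs_triang|].
    eapply Rle_trans; [apply Rplus_le_compat_r; apply Rabs_triang|].
    rewrite Rabs_Ropp, !Rabs_mult, (Rabs_right kinf), (Rabs_right (kinf^2)), (Rabs_right (j^2)) by
      (try apply Rle_ge, pow2_ge_0; lra).
    assert (kinf ^ 2 * Rabs (/ j ^ 2 - j ^ 2) <= kinf^2 * eta) by (apply Rmult_le_compat_l; auto; apply pow2_ge_0).
    change (/ j ^ 2 + - j ^ 2) with (/ j ^ 2 - j ^ 2). lra. }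
  assert (hjinv : 0 < / j <= 2).
  { split. apply Rinv_0_lt_compat; lra. apply (Rmult_le_reg_l j); [lra|]. rewrite Rinv_r by lra. lra. }
  apply Rle_trans with ((kinf * Rabs (q s) + kinf^2 * eta + j^2 * Rabs (k2 s - kinf^2)) * / j).
  { apply Rmult_le_compat_r; lra. }
  assert (e1 : j^2 * Rabs (k2 s - kinf^2) * / j = j * Rabs (k2 s - kinf^2)) by (field; lra).
  assert (h1 : (kinf * Rabs (q s) + kinf^2 * eta) * / j <= (kinf * Rabs (q s) + kinf^2 * eta) * 2).
  { apply Rmult_le_compat_l; [|lra]. pose proof (Rabs_pos (q s)). pose proof (Rabs_pos (/ j^2 - j^2)). nra. }
  assert (h2 : j * Rabs (k2 s - kinf^2) <= 2 * Rabs (k2 s - kinf^2)).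
  { apply Rmult_le_compat_r; [apply Rabs_pos|lra]. }
  assert (e2 : 2 * kinf * (Rabs (q s) + / kinf * Rabs (k2 s - kinf ^ 2)) = 2 * kinf * Rabs (q s) + 2 * Rabs (k2 s - kinf ^ 2)) by (field; auto).
  rewrite e2. rewrite Rmult_plus_distr_r, e1. lra.
Qed.

Lemma locest_J x t eta tau tauq : x <= t ->
  (forall s, x <= s <= t -> 1/2 <= J s <= 2 /\ Rabs (/ J s ^ 2 - J s ^ 2) <= eta) ->
  forall pr : Riemann_integrable (fun s => Rabs (k2 s - kinf ^ 2)) x t, RiemannInt pr <= tau ->
  forall prq : Riemann_integrable (fun s => Rabs (q s)) x t, RiemannInt prq <= tauq ->
  Rabs (J1 t - J1 x) <= 2 * kinf ^ 2 * eta * (t - x) + 2 * kinf * tauq + 2 * tau.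
Proof.
  intros hxt HJb pr Hpr prq Hprq.
  assert (C2 : forall s, x <= s <= t -> continuity_pt J2 s) by (intros; apply HJ2c).
  assert (pr2 := continuity_implies_RiemannInt hxt C2).
  assert (E1 : RiemannInt pr2 = J1 t - J1 x) by (apply FTC; auto).
  assert (pr2a := RiemannInt_P16 pr2).
  assert (E2 := RiemannInt_P17 pr2 pr2a hxt).
  assert (pra := RiemannInt_P10 (/ kinf) prq pr).
  assert (Ea := RiemannInt_P13 prq pr pra).
  assert (prB := RiemannInt_P10 (2 * kinf) (RiemannInt_P14 x t (2 * kinf ^ 2 * eta)) pra).
  assert (EB := RiemannInt_P13 (RiemannInt_P14 x t (2 * kinf ^ 2 * eta)) pra prB).
  rewrite RiemannInt_P15 in EB.
  assert (E3 : RiemannInt pr2a <= RiemannInt prB).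
  { apply RiemannInt_P19; auto. intros s hs. unfold fct_cte.
    destruct (HJb s ltac:(lra)) as [h1 h2]. apply J2_bound; auto. }
  rewrite <- E1.
  assert (h : 2 * kinf * (RiemannInt prq + / kinf * RiemannInt pr) <= 2 * kinf * tauq + 2 * tau).
  { assert (e : 2 * kinf * (RiemannInt prq + / kinf * RiemannInt pr) = 2 * kinf * RiemannInt prq + 2 * RiemannInt pr) by (field; lra).
    rewrite e. nra. }
  rewrite Ea in EB. lra.
Qed.

Lemma tailK d : forall eps, eps > 0 -> exists M, forall x t, x <= t -> pcnd d M x t ->
  exists pr : Riemann_integrable (fun s => Rabs (k2 s - kinf ^ 2)) x t, RiemannInt pr <= eps.
Proof.
  intros eps he. destruct d.
  - destruct Hintp as [M0 [B HB]].
    destruct (tail_p (fun x => k2 x - kinf ^ 2) M0 B HB eps he) as [M HM].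
    exists M. intros x t hxt hp. unfold pcnd in hp. apply HM. lra.
  - destruct Hintm as [M0 [B HB]].
    destruct (tail_m (fun x => k2 x - kinf ^ 2) M0 B HB eps he) as [M HM].
    exists M. intros x t hxt hp. unfold pcnd in hp. apply HM. lra.
Qed.

Lemma tailQ d : forall eps, eps > 0 -> exists M, forall x t, x <= t -> pcnd d M x t ->
  forall pr : Riemann_integrable (fun s => Rabs (q s)) x t, RiemannInt pr <= eps.
Proof.
  intros eps he. destruct d.
  - destruct (tailI_p _ _ HI eps he) as [M HM].
    exists M. intros x t hxt hp pr. unfold pcnd in hp. apply HM. lra.
  - destruct (tailI_m _ _ HI eps he) as [M HM].
    exists M. intros x t hxt hp pr. unfold pcnd in hp. apply HM. lra.
Qed.

Lemma du_lim d u du A dA BA (Hu : solves_ode k2 u du)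
  (HA : forall x, derivable_pt_lim A x (dA x))
  (HdA : forall x, derivable_pt_lim dA x (- (kinf ^ 2 * A x)))
  (HAb : forall x, Rabs (A x) <= BA)
  (Hcl : tends0 d (fun x => u x - A x)) : tends0 d (fun x => du x - dA x).
Proof.
  apply (dlim d (fun x => u x - A x)); auto.
  - intros x. apply (Dsub u A). apply Hu. apply HA.
  - intros eps he.
    assert (hBA : 0 <= BA) by (apply Rle_trans with (Rabs (A 0)); [apply Rabs_pos|auto]).
    set (Bu := BA + 1).
    destruct (tailK d (eps / (2 * Bu)) ltac:(apply Rdiv_lt_0_compat; unfold Bu; lra)) as [M1 HM1].
    set (eta := Rmin 1 (eps / (2 * (kinf ^ 2 + 1)))).
    assert (heta : 0 < eta).
    { unfold eta. apply Rmin_glb_lt; [lra|]. apply Rdiv_lt_0_compat; [lra|]. pose proof (pow2_ge_0 kinf). lra. }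
    destruct (Hcl eta heta) as [M2 HM2].
    exists (mcomb d M1 M2). intros x t hxt hp.
    destruct (pcnd_comb d M1 M2 x t hp) as [hp1 hp2].
    destruct (HM1 x t ltac:(lra) hp1) as [pr hpr].
    assert (Hs : forall s, x <= s <= t -> Rabs (u s - A s) <= eta).
    { intros s hs. apply Rlt_le, HM2. apply (pcnd_reg d M2 x t s hs hp2). }
    assert (HB : forall s, x <= s <= t -> Rabs (u s) <= Bu).
    { intros s hs. specialize (Hs s hs). specialize (HAb s).
      replace (u s) with ((u s - A s) + A s) by ring.
      eapply Rle_trans; [apply Rabs_triang|]. unfold Bu.
      assert (eta <= 1) by apply Rmin_l. lra. }
    assert (L := locest_u u du A dA Hu HA HdA x t Bu eta (eps / (2 * Bu)) ltac:(lra) HB Hs pr hpr).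
    replace ((du t - dA t) - (du x - dA x)) with ((du t - dA t) - (du x - dA x)) in L by ring.
    eapply Rle_trans; [exact L|].
    assert (e1 : Bu * (eps / (2 * Bu)) = eps / 2) by (field; unfold Bu; lra).
    assert (e2 : kinf ^ 2 * eta * (t - x) <= eps / 2).
    { assert (eta <= eps / (2 * (kinf ^ 2 + 1))) by apply Rmin_r.
      pose proof (pow2_ge_0 kinf).
      assert (kinf ^ 2 * eta <= kinf^2 * (eps / (2 * (kinf ^ 2 + 1)))) by (apply Rmult_le_compat_l; lra).
      assert (kinf^2 * (eps / (2 * (kinf ^ 2 + 1))) <= eps / 2).
      { assert (e : kinf^2 * (eps / (2 * (kinf ^ 2 + 1))) = eps / 2 - eps / (2 * (kinf ^ 2 + 1))) by (field; lra).
        rewrite e. assert (0 < eps / (2 * (kinf ^ 2 + 1))) by (apply Rdiv_lt_0_compat; lra). lra. }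
      assert (0 <= kinf ^ 2 * eta) by nra. nra. }
    lra.
Qed.

Lemma J1_lim d (HJl : tends0 d (fun x => J x - 1)) : tends0 d J1.
Proof.
  apply (dlim d (fun x => J x - 1)); auto.
  - intros x. eapply Dval. Dtac. apply HJ1. ring.
  - intros eps he.
    assert (hk2 : 0 < kinf ^ 2) by (apply pow_lt; lra).
    set (eta := eps / (6 * kinf ^ 2)).
    assert (heta : 0 < eta) by (unfold eta; apply Rdiv_lt_0_compat; lra).
    set (del := Rmin (1/2) (eta / 60)).
    assert (hdel : 0 < del) by (unfold del; apply Rmin_glb_lt; lra).
    destruct (tailK d (eps / 6) ltac:(lra)) as [M1 HM1].
    destruct (tailQ d (eps / (6 * kinf)) ltac:(apply Rdiv_lt_0_compat; lra)) as [M2 HM2].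
    destruct (HJl del hdel) as [M3 HM3].
    exists (mcomb d M1 (mcomb d M2 M3)). intros x t hxt hp.
    destruct (pcnd_comb d _ _ x t hp) as [hp1 hp'].
    destruct (pcnd_comb d _ _ x t hp') as [hp2 hp3].
    destruct (HM1 x t ltac:(lra) hp1) as [pr hpr].
    destruct (int_q x t ltac:(lra)) as [prq].
    assert (hprq := HM2 x t ltac:(lra) hp2 prq).
    assert (Hb : forall s, x <= s <= t -> 1/2 <= J s <= 2 /\ Rabs (/ J s ^ 2 - J s ^ 2) <= eta).
    { intros s hs. assert (h := HM3 s (pcnd_reg d M3 x t s hs hp3)). cbv beta in h.
      assert (del <= 1/2) by apply Rmin_l. assert (del <= eta / 60) by apply Rmin_r.
      apply Rabs_def2 in h as hh.
      assert (hJ : 1/2 <= J s <= 2) by lra. split; auto.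
      eapply Rle_trans; [apply inv_sq_bound; auto|]. lra. }
    assert (L := locest_J x t eta (eps / 6) (eps / (6 * kinf)) ltac:(lra) Hb pr hpr prq hprq).
    eapply Rle_trans; [exact L|].
    assert (e1 : 2 * kinf ^ 2 * eta = eps / 3) by (unfold eta; field; lra).
    assert (e2 : 2 * kinf * (eps / (6 * kinf)) = eps / 3) by (field; lra).
    rewrite e1, e2. assert (eps / 3 * (t - x) <= eps / 3) by nra. lra.
Qed.

Definition tr a b x := a * cos (kinf * x) + b * sin (kinf * x).
Definition dtr a b x := kinf * (b * cos (kinf * x) - a * sin (kinf * x)).

Lemma D_tr a b x : derivable_pt_lim (tr a b) x (dtr a b x).
Proof. unfold tr, dtr. eapply Dval. Dtac. ring. Qed.

Lemma D_dtr a b x : derivable_pt_lim (dtr a b) x (- (kinf ^ 2 * tr a b x)).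
Proof. unfold tr, dtr. eapply Dval. Dtac. ring. Qed.

Lemma tr_bound a b x : Rabs (tr a b x) <= Rabs a + Rabs b.
Proof.
  unfold tr. eapply Rle_trans; [apply Rabs_triang|]. rewrite !Rabs_mult.
  assert (Rabs (cos (kinf * x)) <= 1) by (apply Rabs_le; apply COS_bound).
  assert (Rabs (sin (kinf * x)) <= 1) by (apply Rabs_le; apply SIN_bound).
  pose proof (Rabs_pos a); pose proof (Rabs_pos b).
  pose proof (Rabs_pos (cos (kinf * x))); pose proof (Rabs_pos (sin (kinf * x))). nra.
Qed.

Lemma bnd_tr d a b : bnd d (tr a b).
Proof. exists (Rabs a + Rabs b). exists 0. intros; apply tr_bound. Qed.

Lemma bnd_dtr d a b : bnd d (dtr a b).
Proof.
  exists (Rabs (kinf * b) + Rabs (- (kinf * a))). exists 0. intros x _.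
  replace (dtr a b x) with (tr (kinf * b) (- (kinf * a)) x) by (unfold tr, dtr; ring). apply tr_bound.
Qed.

Lemma trsq a b x : tr a b x ^ 2 + (dtr a b x / kinf) ^ 2 = a ^ 2 + b ^ 2.
Proof.
  unfold tr, dtr. set (c := cos (kinf * x)). set (s := sin (kinf * x)).
  assert (h : s ^ 2 + c ^ 2 = 1) by (unfold s, c; rewrite <- !Rsqr_pow2; apply sin2_cos2).
  transitivity ((a^2 + b^2) * (s ^ 2 + c ^ 2)); [field; lra|rewrite h; ring].
Qed.

Lemma trcross a1 b1 a2 b2 x :
  (tr a1 b1 x * dtr a2 b2 x - tr a2 b2 x * dtr a1 b1 x) / kinf = a1 * b2 - a2 * b1.
Proof.
  unfold tr, dtr. set (c := cos (kinf * x)). set (s := sin (kinf * x)).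
  assert (h : s ^ 2 + c ^ 2 = 1) by (unfold s, c; rewrite <- !Rsqr_pow2; apply sin2_cos2).
  transitivity ((a1 * b2 - a2 * b1) * (s ^ 2 + c ^ 2)); [field; lra|rewrite h; ring].
Qed.

Lemma asym d a1 b1 a2 b2 :
  tends0 d (fun x => u1 x - tr a1 b1 x) -> tends0 d (fun x => u2 x - tr a2 b2 x) ->
  tends0 d (fun x => J x - 1) ->
  tends0 d (fun x => Sen x - (a1^2 + b1^2 + a2^2 + b2^2) / 2) /\ tends0 d (fun x => Wr x - (a1 * b2 - a2 * b1)).
Proof.
  intros H1 H2 HJl.
  assert (hk : kinf <> 0) by lra.
  assert (c1 : close d u1 (tr a1 b1)) by exact H1.
  assert (c2 : close d u2 (tr a2 b2)) by exact H2.
  assert (cd1 : close d du1 (dtr a1 b1)).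
  { apply (du_lim d u1 du1 (tr a1 b1) (dtr a1 b1) (Rabs a1 + Rabs b1)); auto.
    apply D_tr. apply D_dtr. apply tr_bound. }
  assert (cd2 : close d du2 (dtr a2 b2)).
  { apply (du_lim d u2 du2 (tr a2 b2) (dtr a2 b2) (Rabs a2 + Rabs b2)); auto.
    apply D_tr. apply D_dtr. apply tr_bound. }
  assert (cJ : close d J (fun _ => 1)) by exact HJl.
  assert (cJ1 : close d J1 (fun _ => 0)).
  { eapply tends0_ext; [|apply (J1_lim d HJl)]. intros; cbv beta; ring. }
  assert (cI : close d (fun x => / J x) (fun _ => 1)).
  { destruct (HJl (1/2) ltac:(lra)) as [M HM].
    assert (bI : bnd d (fun x => / J x)).
    { exists 2. exists M. intros x hx. specialize (HM x hx). apply Rabs_def2 in HM.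
      rewrite Rabs_right by (apply Rle_ge, Rlt_le, Rinv_0_lt_compat; lra).
      apply (Rmult_le_reg_l (J x)); [lra|]. rewrite Rinv_r by lra. lra. }
    assert (T := tends0_opp d _ (tends0_mult d _ _ HJl bI)).
    eapply tends0_ext; [|exact T]. intros x; cbv beta. field. apply Jne. }
  assert (b1' := bnd_tr d a1 b1). assert (b2' := bnd_tr d a2 b2).
  assert (bd1 := bnd_dtr d a1 b1). assert (bd2 := bnd_dtr d a2 b2).
  assert (bc1 := bnd_const d 1). assert (bc0 := bnd_const d 0).
  assert (cw1 := close_mult d _ _ _ _ c1 cI b1' bc1).
  assert (cw2 := close_mult d _ _ _ _ c2 cI b2' bc1).
  assert (cp1 := close_const_mult d (/ kinf) _ _ (close_minus d _ _ _ _
     (close_mult d _ _ _ _ cJ cd1 bc1 bd1) (close_mult d _ _ _ _ cJ1 c1 bc0 b1'))).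
  assert (cp2 := close_const_mult d (/ kinf) _ _ (close_minus d _ _ _ _
     (close_mult d _ _ _ _ cJ cd2 bc1 bd2) (close_mult d _ _ _ _ cJ1 c2 bc0 b2'))).
  assert (bw1 : bnd d (fun x => tr a1 b1 x * 1)) by (apply bnd_mult; auto).
  assert (bw2 : bnd d (fun x => tr a2 b2 x * 1)) by (apply bnd_mult; auto).
  assert (bp1 : bnd d (fun x => / kinf * (1 * dtr a1 b1 x - 0 * tr a1 b1 x))).
  { apply (bnd_mult d (fun _ => / kinf)); [apply bnd_const|].
    apply bnd_minus; apply bnd_mult; auto. }
  assert (bp2 : bnd d (fun x => / kinf * (1 * dtr a2 b2 x - 0 * tr a2 b2 x))).
  { apply (bnd_mult d (fun _ => / kinf)); [apply bnd_const|].
    apply bnd_minus; apply bnd_mult; auto. }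
  split.
  - assert (cS := close_const_mult d (/ 2) _ _ (close_plus d _ _ _ _ (close_plus d _ _ _ _ (close_plus d _ _ _ _
       (close_mult d _ _ _ _ cw1 cw1 bw1 bw1) (close_mult d _ _ _ _ cw2 cw2 bw2 bw2))
       (close_mult d _ _ _ _ cp1 cp1 bp1 bp1)) (close_mult d _ _ _ _ cp2 cp2 bp2 bp2))).
    eapply close_tends0.
    + eapply close_ext; [| |exact cS]; [intros x; cbv beta; unfold Sen, p1, p2; field; split; auto; apply Jne|].
      intros x. reflexivity.
    + intros x. cbv beta. replace (a1^2+b1^2+a2^2+b2^2) with ((a1^2+b1^2)+(a2^2+b2^2)) by ring.
      rewrite <- (trsq a1 b1 x), <- (trsq a2 b2 x). field. lra.
  - assert (cW := close_const_mult d (/ kinf) _ _ (close_minus d _ _ _ _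
       (close_mult d _ _ _ _ c1 cd2 b1' bd2) (close_mult d _ _ _ _ c2 cd1 b2' bd1))).
    eapply close_tends0.
    + eapply close_ext; [| |exact cW]; [intros x; cbv beta; unfold Wr; field; lra|].
      intros x. reflexivity.
    + intros x. cbv beta. rewrite <- (trcross a1 b1 a2 b2 x). field. lra.
Qed.

Lemma SW_pos x : 0 <= Sen x /\ Sen x ^ 2 - Wr x ^ 2 >= 0.
Proof.
  assert (EW : Wr x = (u1 x / J x) * p2 x - (u2 x / J x) * p1 x).
  { unfold Wr, p1, p2. field. split; [lra|apply Jne]. }
  split.
  - unfold Sen. assert (0 <= (u1 x / J x)^2) by apply pow2_ge_0.
    assert (0 <= (u2 x / J x)^2) by apply pow2_ge_0.
    assert (0 <= (p1 x)^2) by apply pow2_ge_0. assert (0 <= (p2 x)^2) by apply pow2_ge_0. lra.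
  - rewrite EW. unfold Sen. pose proof (alg_SW (u1 x / J x) (u2 x / J x) (p1 x) (p2 x)).
    pose proof (pow2_ge_0 (u1 x / J x * p1 x + u2 x / J x * p2 x)). lra.
Qed.

Lemma final : t1 ^ 2 + t2 ^ 2 >= 1 / (cosh (I / 2)) ^ 2.
Proof.
  set (T := t1 ^ 2 + t2 ^ 2). set (R := r1 ^ 2 + r2 ^ 2).
  assert (hR : 0 <= R) by (unfold R; pose proof (pow2_ge_0 r1); pose proof (pow2_ge_0 r2); lra).
  destruct (asym true t1 (- t2) t2 t1) as [HSp HWp].
  { eapply tends0_ext; [|apply (lim_pinf_t _ _ Hp1)]. intros x; unfold tr; cbv beta; ring. }
  { eapply tends0_ext; [|apply (lim_pinf_t _ _ Hp2)]. intros x; unfold tr; cbv beta; ring. }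
  { apply (lim_pinf_t _ _ HJp). }
  destruct (asym false (1 + r1) r2 r2 (1 - r1)) as [HSm HWm].
  { eapply tends0_ext; [|apply (lim_minf_t _ _ Hm1)]. intros x; unfold tr; cbv beta; ring. }
  { eapply tends0_ext; [|apply (lim_minf_t _ _ Hm2)]. intros x; unfold tr; cbv beta; ring. }
  { apply (lim_minf_t _ _ HJm). }
  assert (HSp' : tends0 true (fun x => Sen x - T)).
  { eapply tends0_ext; [|exact HSp]. intros x; cbv beta; unfold T; field. }
  assert (HSm' : tends0 false (fun x => Sen x - (1 + R))).
  { eapply tends0_ext; [|exact HSm]. intros x; cbv beta; unfold R; field. }
  assert (HW : forall x, Wr x = Wr 0).
  { intros x. destruct (Rle_dec x 0) as [h|h].
    - apply (global x 0 h).
    - symmetry. apply (global 0 x). lra. }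
  assert (HWT : Wr 0 = T).
  { apply (const_tends true Wr (Wr 0) T); auto.
    eapply tends0_ext; [|exact HWp]. intros x; cbv beta; unfold T; ring. }
  assert (HWR : Wr 0 = 1 - R).
  { apply (const_tends false Wr (Wr 0) (1 - R)); auto.
    eapply tends0_ext; [|exact HWm]. intros x; cbv beta; unfold R; ring. }
  assert (HTR : T = 1 - R) by lra.
  set (F := fun dl => (1 + R - dl) + sqrt ((1 + R - dl) ^ 2 - T ^ 2 + dl)).
  set (H := fun dl => ((T + dl) + sqrt ((T + dl) ^ 2 - T ^ 2 + dl)) * exp I).
  assert (Hle : forall dl, 0 < dl <= 1 -> F dl <= H dl).
  { intros dl hdl.
    destruct (HSm' dl ltac:(lra)) as [M1 HM1].
    destruct (HSp' dl ltac:(lra)) as [M2 HM2].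
    set (x := M1). set (y := Rmax M1 M2).
    assert (hx : Rabs (Sen x - (1 + R)) < dl) by (apply HM1; unfold dreg, x; lra).
    assert (hy : Rabs (Sen y - T) < dl) by (apply HM2; unfold dreg, y; apply Rmax_r).
    assert (hxy : x <= y) by (unfold x, y; apply Rmax_l).
    apply Rabs_def2 in hx. apply Rabs_def2 in hy.
    destruct (int_q x y hxy) as [pr].
    destruct (global x y hxy) as [_ Hg]. specialize (Hg dl ltac:(lra) pr).
    assert (HIb : RiemannInt pr <= I).
    { apply (I_bound _ I HI); auto. intros; apply Rabs_pos. }
    destruct (SW_pos x) as [hSx hWx]. destruct (SW_pos y) as [hSy hWy].
    assert (Gxp : 0 < G dl x).
    { unfold G. assert (0 < sqrt (Sen x ^ 2 - Wr x ^ 2 + dl)) by (apply sqrt_lt_R0; lra). lra. }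
    assert (Gyp : 0 < G dl y).
    { unfold G. assert (0 < sqrt (Sen y ^ 2 - Wr y ^ 2 + dl)) by (apply sqrt_lt_R0; lra). lra. }
    assert (Gxy : G dl x <= G dl y * exp I).
    { apply exp_le in Hg. rewrite exp_ln in Hg by auto. rewrite exp_plus, exp_ln in Hg by auto.
      eapply Rle_trans; [exact Hg|]. apply Rmult_le_compat_l; [lra|]. apply exp_le; auto. }
    assert (F1 : F dl <= G dl x).
    { unfold F, G. rewrite HW, HWT. apply mono_h. lra. }
    assert (F2 : G dl y <= (T + dl) + sqrt ((T + dl) ^ 2 - T ^ 2 + dl)).
    { unfold G. rewrite HW, HWT. apply mono_h. lra. }
    unfold H. assert (G dl y * exp I <= ((T + dl) + sqrt ((T + dl) ^ 2 - T ^ 2 + dl)) * exp I).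
    { apply Rmult_le_compat_r; auto. apply Rlt_le, exp_pos. }
    lra. }
  assert (HL : F 0 <= H 0).
  { apply lim_le_cont; auto.
    - unfold F. Ctac. rewrite HTR. nra.
    - unfold H. Ctac. nra. }
  unfold F, H in HL.
  replace ((1 + R - 0) ^ 2 - T ^ 2 + 0) with (4 * R) in HL by (rewrite HTR; ring).
  replace ((T + 0) ^ 2 - T ^ 2 + 0) with 0 in HL by ring.
  rewrite sqrt_0 in HL.
  apply (final_alg R T I); auto. lra.
Qed.

End Main.


Theorem mainTheorem9
  (k2 : R -> R) (kinf : R)
  (Hkinf : kinf > 0)
  (Hpc : piecewise_continuous k2)
  (Hlimp : lim_pinf k2 (kinf ^ 2))
  (Hlimm : lim_minf k2 (kinf ^ 2))
  (Hintp : integrable_near_pinf (fun x => k2 x - kinf ^ 2))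
  (Hintm : integrable_near_minf (fun x => k2 x - kinf ^ 2))
  (u1 u2 du1 du2 : R -> R) (r1 r2 t1 t2 : R)
  (Hu1 : solves_ode k2 u1 du1)
  (Hu2 : solves_ode k2 u2 du2)
  (Hm1 : lim_minf (fun x => u1 x - (cos (kinf * x) + r1 * cos (kinf * x) + r2 * sin (kinf * x))) 0)
  (Hm2 : lim_minf (fun x => u2 x - (sin (kinf * x) + r2 * cos (kinf * x) - r1 * sin (kinf * x))) 0)
  (Hp1 : lim_pinf (fun x => u1 x - (t1 * cos (kinf * x) - t2 * sin (kinf * x))) 0)
  (Hp2 : lim_pinf (fun x => u2 x - (t1 * sin (kinf * x) + t2 * cos (kinf * x))) 0)
  (J J1 J2 : R -> R)
  (HJ1 : forall x, derivable_pt_lim J x (J1 x))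
  (HJ2 : forall x, derivable_pt_lim J1 x (J2 x))
  (HJ2c : continuity J2)
  (HJpos : forall x, J x > 0)
  (HJp : lim_pinf J 1)
  (HJm : lim_minf J 1)
  (I : R)
  (HI : improper_integral_R
          (fun x => Rabs (J x ^ 2 / kinf * (k2 x + J2 x / J x) - kinf / J x ^ 2)) I) :
  t1 ^ 2 + t2 ^ 2 >= 1 / (cosh (I / 2)) ^ 2.
Proof.
  exact (final k2 kinf Hkinf Hpc Hintp Hintm u1 u2 du1 du2 r1 r2 t1 t2 Hu1 Hu2 Hm1 Hm2 Hp1 Hp2
    J J1 J2 HJ1 HJ2 HJ2c HJpos HJp HJm I HI).
Qed.
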